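(* Suppose $\Sigma$ is of type-H. Let $\xi$ be any measure, and let $\lambda,\lambda_1,\lambda_2\in\mathbb R$. Define $q_\xi^*=c_{\xi00}-(c_{\xi01},c_{\xi02})\,Q_\xi^+\,(c_{\xi10},c_{\xi20})'$ and, with $\ell_\lambda=(1,\lambda,\lambda)'$, $\ell_2=(0,1,1)'$, $q_{\xi,2}^*=\ell_\lambda'V_\xi\ell_\lambda-(\ell_\lambda'V_\xi\ell_2)^2(\ell_2'V_\xi\ell_2)^+$. Then $q_{\xi,2}^*=q_\xi^*$. Moreover, if $1+2\lambda\ne0$ and $1+\lambda_1+\lambda_2\ne0$, define, with $\ell_3=(2,-1,-1)'$, $q_{\xi,3}^*=\ell_\lambda'V_\xi\ell_\lambda-(\ell_\lambda'V_\xi\ell_3)^2(\ell_3'V_\xi\ell_3)^+$, and with $\ell=(1,\lambda_1,\lambda_2)'$, $\ell_0=(-1,1+\lambda_2,-\lambda_2)'$, $\ell_1=(-1,-\lambda_1,1+\lambda_1)'$, $L_0=(\ell_0,\ell_1)$, $q_{\xi,1}^*=\ell'V_\xi\ell-\ell'V_\xi L_0(L_0'V_\xi L_0)^+L_0'V_\xi\ell$. Then $(1+2\lambda)^{-2}q_{\xi,3}^*=(1+\lambda_1+\lambda_2)^{-2}q_{\xi,1}^*$.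
   Context: Fix integers $k\ge 2$ and $t\ge 2$. Let $\mathcal S$ be the set of all $t^k$ sequences $s=(t_1,\dots,t_k)$ with entries $t_j\in\{1,\dots,t\}$. For $s\in\mathcal S$ let $T_s$ be the $k\times t$ matrix with $(j,i)$ entry equal to $1$ if $t_j=i$ and $0$ otherwise; let $H$ be the $k\times k$ matrix with $(i,j)$ entry $1$ if $i\equiv j+1\pmod k$ and $0$ otherwise; put $L_s=HT_s$, $R_s=H'T_s$ (a prime denotes transpose). Let $\Sigma$ be a fixed $k\times k$ positive definite matrix, $1_k$ the all-ones vector, and $\tilde B=\Sigma^{-1}-\Sigma^{-1}1_k1_k'\Sigma^{-1}/(1_k'\Sigma^{-1}1_k)$. With $G_0=T_s,G_1=L_s,G_2=R_s$ define for $0\le i,j\le 2$ the $t\times t$ matrices $C_{sij}=G_i'\tilde BG_j$. A measure is a vector $\xi=(p_s)_{s\in\mathcal S}$ with $p_s\ge0$, $\sum_sp_s=1$. Put $C_{\xi ij}=\sum_sp_sC_{sij}$, $c_{\xi ij}=\operatorname{tr}(C_{\xi ij})$, $V_\xi=(c_{\xi ij})_{0\le i,j\le2}$, $Q_\xi=(c_{\xi ij})_{1\le i,j\le2}$. $M^+$ denotes the Moore–Penrose inverse (for a scalar $a$, $a^+=1/a$ if $a\ne0$ and $0^+=0$). The matrix $\Sigma$ is of type-H if $\Sigma=I_k+\eta1_k'+1_k\eta'$ for some $\eta\in\mathbb R^k$ (and is positive definite). *)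

(* Defs.v *)
From HB Require Import structures.
From Stdlib Require Import ClassicalEpsilon.
From mathcomp Require Import all_boot all_order all_algebra.
Set Implicit Arguments. Unset Strict Implicit. Unset Printing Implicit Defensive.
Import Order.TTheory GRing.Theory Num.Theory.
Local Open Scope ring_scope.

Section Defs.
Variable R : realFieldType.

Definition is_MP (m n : nat) (A : 'M[R]_(m, n)) (X : 'M[R]_(n, m)) : Prop :=
  [/\ A *m X *m A = A, X *m A *m X = X,
      (A *m X)^T = A *m X & (X *m A)^T = X *m A].

Definition pinv (m n : nat) (A : 'M[R]_(m, n)) : 'M[R]_(n, m) :=
  epsilon (inhabits 0) (is_MP A).

Definition posdef (k : nat) (S : 'M[R]_k) : Prop :=
  S^T = S /\ forall x : 'cV[R]_k, x != 0 -> 0 < (x^T *m S *m x) 0 0.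

Definition ones (k : nat) : 'cV[R]_k := const_mx 1.

Definition typeH (k : nat) (S : 'M[R]_k) : Prop :=
  posdef S /\ exists eta : 'cV[R]_k,
    S = 1%:M + eta *m (ones k)^T + ones k *m eta^T.

(* sequences s = (t_1..t_k) with entries in {1..t}, encoded 0-based *)
Definition seqs (k t : nat) := {ffun 'I_k -> 'I_t}.

Definition Tmat (k t : nat) (s : seqs k t) : 'M[R]_(k, t) :=
  \matrix_(j < k, i < t) (s j == i)%:R.

Definition Hmat (k : nat) : 'M[R]_k :=
  \matrix_(i < k, j < k) (val i == ((val j).+1 %% k)%N)%:R.

Definition Lmat k t (s : seqs k t) : 'M[R]_(k, t) := Hmat k *m Tmat s.
Definition Rmat k t (s : seqs k t) : 'M[R]_(k, t) := (Hmat k)^T *m Tmat s.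

Definition Btilde (k : nat) (S : 'M[R]_k) : 'M[R]_k :=
  invmx S - ((((ones k)^T *m invmx S *m ones k) 0 0)^-1)
            *: (invmx S *m ones k *m (ones k)^T *m invmx S).

Definition Gmat k t (s : seqs k t) (i : 'I_3) : 'M[R]_(k, t) :=
  if val i == 0%N then Tmat s else if val i == 1%N then Lmat s else Rmat s.

Definition Cs k t (S : 'M[R]_k) (s : seqs k t) (i j : 'I_3) : 'M[R]_t :=
  (Gmat s i)^T *m Btilde S *m Gmat s j.

Definition is_measure k t (p : seqs k t -> R) : Prop :=
  (forall s, 0 <= p s) /\ \sum_s p s = 1.

Definition Cxi k t (S : 'M[R]_k) (p : seqs k t -> R) (i j : 'I_3) : 'M[R]_t :=
  \sum_s p s *: Cs S s i j.

Definition cxi k t S (p : seqs k t -> R) (i j : 'I_3) : R := \tr (Cxi S p i j).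

Definition Vxi k t S (p : seqs k t -> R) : 'M[R]_3 :=
  \matrix_(i, j) cxi S p i j.

Definition Qxi k t S (p : seqs k t -> R) : 'M[R]_2 :=
  \matrix_(i < 2, j < 2) cxi S p (lift ord0 i) (lift ord0 j).

Definition vec3 (a b c : R) : 'cV[R]_3 :=
  \col_(i < 3) (if val i == 0%N then a else if val i == 1%N then b else c).

Definition bil (u : 'cV[R]_3) (V : 'M[R]_3) (w : 'cV[R]_3) : R :=
  (u^T *m V *m w) 0 0.

Definition qstar k t S (p : seqs k t -> R) : R :=
  let c := cxi S p in
  c ord0 ord0 -
  ((\row_(j < 2) c ord0 (lift ord0 j)) *m pinv (Qxi S p)
     *m (\col_(i < 2) c (lift ord0 i) ord0)) 0 0.

(* l'Vl - (l'V m)^2 (m'Vm)^+ ; scalar pseudo-inverse of a field is x^-1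
   (with 0^-1 = 0 in MathComp) *)
Definition qproj (V : 'M[R]_3) (l m : 'cV[R]_3) : R :=
  bil l V l - (bil l V m) ^+ 2 * (bil m V m)^-1.

Definition q1 (V : 'M[R]_3) (l1 l2 : R) : R :=
  let l := vec3 1 l1 l2 in
  let L0 : 'M[R]_(3, 2) := row_mx (vec3 (-1) (1 + l2) (- l2))
                                  (vec3 (-1) (- l1) (1 + l1)) in
  (l^T *m V *m l - l^T *m V *m L0 *m pinv (L0^T *m V *m L0) *m L0^T *m V *m l) 0 0.

End Defs.

(* Main.v *)
Require Import Defs.
From HB Require Import structures.
From Stdlib Require Import ClassicalEpsilon.
From mathcomp Require Import all_boot all_order all_algebra.
From mathcomp.algebra_tactics Require Import ring lra.
Set Implicit Arguments. Unset Strict Implicit. Unset Printing Implicit Defensive.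
Import Order.TTheory GRing.Theory Num.Theory.
Local Open Scope ring_scope.


Section Pinv.
Variable R : realFieldType.

Lemma ord2_cases (i : 'I_2) : i = ord0 \/ i = lift ord0 ord0.
Proof. case: i => [[|[|//]] Hi]; [left|right]; exact: val_inj. Qed.

Lemma ord3_cases (i : 'I_3) :
  [\/ i = ord0, i = lift ord0 ord0 | i = lift ord0 (lift ord0 ord0)].
Proof.
case: i => [[|[|[|//]]] Hi]; [apply: Or31|apply: Or32|apply: Or33]; exact: val_inj.
Qed.

Ltac mxx := repeat progress (rewrite ?mxE ?big_ord_recl ?big_ord0 /=).

Lemma MP_exists2 (A : 'M[R]_2) : A^T = A -> exists X, is_MP A X.
Proof.
move=> AT.
have As : A ord0 (lift ord0 ord0) = A (lift ord0 ord0) ord0.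
  by move/matrixP: AT => /(_ (lift ord0 ord0) ord0); rewrite mxE.
set p := A ord0 ord0; set q := A ord0 (lift ord0 ord0); set r := A (lift ord0 ord0) (lift ord0 ord0).
have [dz|dnz] := eqVneq (p * r - q * q) 0.
- have AA : A *m A = (p + r) *: A.
    apply/matrixP => i j; case: (ord2_cases i) => ->; case: (ord2_cases j) => ->;
    mxx; rewrite -?As -/p -/q -/r; move/eqP: dz => dz; nra.
  have [tz|tnz] := eqVneq (p + r) 0.
  + have A0 : A = 0.
      have r0 : r = 0 by move/eqP: dz; move/eqP: tz => tz dz; nra.
      have p0 : p = 0 by move/eqP: tz; rewrite r0 addr0 => /eqP.
      have q0 : q = 0 by move/eqP: dz; rewrite r0 p0 mul0r sub0r oppr_eq0 mulf_eq0 orbb => /eqP.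
      apply/matrixP => i j; case: (ord2_cases i) => ->; case: (ord2_cases j) => ->;
        rewrite mxE //; rewrite -?As; by [].
    exists 0; rewrite A0 /is_MP ?mul0mx ?mulmx0 ?trmx0; by split.
  + exists (((p + r) * (p + r))^-1 *: A).
    have AAA : A *m A *m A = ((p + r) * (p + r)) *: A.
      by rewrite AA -scalemxAl AA scalerA.
    have tt : (p + r) * (p + r) != 0 by rewrite mulf_neq0.
    split.
    * by rewrite -scalemxAr -scalemxAl AA -scalemxAl AA !scalerA -mulrA mulVf // scale1r.
    * do 3 rewrite -?scalemxAr -?scalemxAl.
      rewrite AA -scalemxAl AA !scalerA.
      have E : (((p + r) * (p + r))^-1 / ((p + r) * (p + r)) * (p + r) * (p + r)) = ((p + r) * (p + r))^-1 :> R by field.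
      by rewrite E.
    * by rewrite -scalemxAr AA linearZ /= linearZ /= AT.
    * by rewrite -scalemxAl AA linearZ /= linearZ /= AT.
- set d := p * r - q * q.
  pose B : 'M[R]_2 := \matrix_(i < 2, j < 2)
     (d^-1 * (if val i == 0%N then (if val j == 0%N then r else - q) else
       (if val j == 0%N then - q else p))).
  have AB : A *m B = 1%:M.
    apply/matrixP => i j; case: (ord2_cases i) => ->; case: (ord2_cases j) => ->;
      rewrite /B; mxx; rewrite -?As -/p -/q -/r; rewrite /d in dnz *; field; exact: dnz.
  have BA := mulmx1C AB.
  exists B; split.
  * by rewrite AB mul1mx.
  * by rewrite BA mul1mx.
  * by rewrite AB trmx1.
  * by rewrite BA trmx1.
Qed.

Lemma pinv_MP2 (A : 'M[R]_2) : A^T = A -> is_MP A (pinv A).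
Proof.
move=> /MP_exists2 Hex; rewrite /pinv.
exact: (epsilon_spec (inhabits 0) (is_MP A) Hex).
Qed.

Lemma quad_ginv n (A X : 'M[R]_n) (y : 'cV[R]_n) :
  A^T = A -> A *m X *m A = A ->
  (A *m y)^T *m X *m (A *m y) = y^T *m A *m y.
Proof.
move=> AT AXA; rewrite trmx_mul AT -!mulmxA (mulmxA A X) (mulmxA (A *m X) A).
by rewrite AXA.
Qed.
End Pinv.



Section Bt.
Variable R : realFieldType.
Variable k : nat.
Hypothesis k0 : (0 < k)%N.

Definition Pm : 'M[R]_k := 1%:M - (k%:R)^-1 *: (ones R k *m (ones R k)^T).

Lemma kR0 : (k%:R : R) != 0.
Proof. by rewrite pnatr_eq0 -lt0n. Qed.

Lemma ones_tm : (ones R k)^T *m ones R k = (k%:R : R)%:M.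
Proof.
apply/matrixP => i j; rewrite !ord1 !mxE /=.
under eq_bigr do rewrite !mxE mulr1.
by rewrite sumr_const card_ord.
Qed.

Lemma Pones : Pm *m ones R k = 0.
Proof.
rewrite /Pm mulmxBl mul1mx -scalemxAl -mulmxA ones_tm mul_mx_scalar scalerA.
by rewrite mulVf ?kR0 // scale1r subrr.
Qed.

Lemma posdef_unit (S : 'M[R]_k) : posdef S -> S \in unitmx.
Proof.
move=> [ST Hpos]; rewrite unitmxE unitfE; apply/negP => /det0P [v vn0 vS].
have vT0 : v^T != 0 by rewrite -(inj_eq (@trmx_inj _ _ _)) trmxK trmx0.
by have := Hpos v^T vT0; rewrite trmxK vS mul0mx mxE ltxx.
Qed.

Lemma Btilde_typeH (S : 'M[R]_k) : typeH S -> Btilde S = Pm.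
Proof.
move=> [Sp [eta Sdef]].
have Su := posdef_unit Sp.
set o := ones R k.
set M := invmx S.
set u := (k%:R)^-1 *: o - Pm *m eta.
have PS : Pm *m S = 1%:M - u *m o^T.
  rewrite Sdef !mulmxDr mulmx1 !mulmxA Pones mul0mx addr0 /u [in RHS]mulmxBl.
  rewrite -scalemxAl {1}/Pm -/o.
  by rewrite opprB addrA addrAC.
have PM : Pm = M - u *m o^T *m M.
  by rewrite -[Pm](mulmxK Su) PS mulmxBl mul1mx.
set c := ((o^T *m M *m o) 0 0).
have Mo : M *m o = c *: u.
  apply/eqP; rewrite -subr_eq0; apply/eqP.
  have := Pones; rewrite -/o PM mulmxBl -!mulmxA (mulmxA o^T) (mx11_scalar (o^T *m M *m o)).
  by rewrite -/c mul_mx_scalar.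
have c0 : c != 0.
  apply/eqP => c0; move: Mo; rewrite c0 scale0r => Mo.
  have : o = 0 by rewrite -[o]mul1mx -(mulmxV Su) -mulmxA -/M Mo mulmx0.
  move/matrixP => /(_ (Ordinal k0) 0); rewrite !mxE => /eqP; by rewrite oner_eq0.
rewrite /Btilde -/o -/M -/c Mo -!scalemxAl scalerA mulVf // scale1r.
by rewrite PM.
Qed.

Lemma sum_delta (x : 'I_k) (F : 'I_k -> R) : \sum_i (i == x)%:R * F i = F x.
Proof.
rewrite (bigD1 x) //= eqxx mul1r big1 ?addr0 // => i /negbTE ->; by rewrite mul0r.
Qed.

Local Notation H := (Hmat R k).
Local Notation o := (ones R k).

Lemma HmatE : H = \matrix_(i, j) (i == ordS j)%:R.
Proof. by apply/matrixP => i j; rewrite !mxE. Qed.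

Lemma HtH : H^T *m H = 1%:M.
Proof.
apply/matrixP => j j'; rewrite HmatE !mxE.
under eq_bigr do rewrite !mxE.
rewrite (sum_delta (ordS j) (fun i => (i == ordS j')%:R)).
by rewrite (inj_eq (can_inj (@ordSK k))).
Qed.

Lemma HHt : H *m H^T = 1%:M.
Proof. exact: mulmx1C HtH. Qed.

Lemma Ho : H *m o = o.
Proof.
apply/matrixP => i j; rewrite HmatE !mxE.
under eq_bigr => l _ do rewrite !mxE -{1}(ord_predK i) (inj_eq (can_inj (@ordSK k))) eq_sym.
by rewrite (sum_delta (ord_pred i) (fun _ => 1)).
Qed.

Lemma Hto : H^T *m o = o.
Proof. by rewrite -{1}Ho mulmxA HtH mul1mx. Qed.

Lemma oH : o^T *m H = o^T.
Proof. by rewrite -[H]trmxK -trmx_mul Hto. Qed.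

Lemma HP : H *m Pm = Pm *m H.
Proof.
rewrite /Pm mulmxBr mulmxBl mulmx1 mul1mx -scalemxAr -scalemxAl.
by rewrite mulmxA Ho -mulmxA oH.
Qed.

Lemma HtPH : H^T *m Pm *m H = Pm.
Proof. by rewrite -mulmxA -HP mulmxA HtH mul1mx. Qed.

Lemma HPHt : H *m Pm *m H^T = Pm.
Proof. by rewrite HP -mulmxA HHt mulmx1. Qed.

Lemma HtP : H^T *m Pm = Pm *m H^T.
Proof. by rewrite -{2}HtPH -!mulmxA HHt mulmx1. Qed.

Lemma Ptr : Pm^T = Pm.
Proof. by rewrite /Pm linearB /= linearZ /= trmx_mul trmxK trmx1. Qed.

Lemma PP : Pm *m Pm = Pm.
Proof.
rewrite {2}/Pm mulmxBr mulmx1 -scalemxAr mulmxA Pones mul0mx scaler0 subr0.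
done.
Qed.
End Bt.



Section Cx.
Variable R : realFieldType.
Variables k t : nat.
Hypothesis k0 : (0 < k)%N.
Variable S : 'M[R]_k.
Hypothesis hB : Btilde S = Pm R k.

Local Notation H := (Hmat R k).
Local Notation P := (Pm R k).

Definition i0 : 'I_3 := ord0.
Definition i1 : 'I_3 := lift ord0 ord0.
Definition i2 : 'I_3 := lift ord0 (lift ord0 ord0).

Definition ts (s : seqs k t) i j : R := \tr (Cs S s i j).

Lemma ts_sym s i j : ts s i j = ts s j i.
Proof.
by rewrite /ts -mxtrace_tr /Cs !trmx_mul trmxK hB Ptr mulmxA.
Qed.

Lemma ts11 s : ts s i1 i1 = ts s i0 i0.
Proof.
rewrite /ts /Cs /Gmat /= hB /Lmat trmx_mul -!mulmxA (mulmxA H^T) (mulmxA (H^T *m P)) HtPH //.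
Qed.

Lemma ts22 s : ts s i2 i2 = ts s i0 i0.
Proof.
rewrite /ts /Cs /Gmat /= hB /Rmat trmx_mul trmxK -!mulmxA (mulmxA H) (mulmxA (H *m P)) HPHt //.
Qed.

Lemma ts20 s : ts s i2 i0 = ts s i0 i1.
Proof.
rewrite /ts /Cs /Gmat /= hB /Rmat /Lmat trmx_mul trmxK -!mulmxA (mulmxA H) HP //.
by rewrite !mulmxA.
Qed.

Lemma cxiE (p : seqs k t -> R) i j : cxi S p i j = \sum_s p s * ts s i j.
Proof.
by rewrite /cxi /Cxi raddf_sum; apply: eq_bigr => s _; rewrite /= mxtraceZ.
Qed.


Definition entv (a b c : R) (i j : nat) : R :=
  if i == j then a else if (i == 0%N) || (j == 0%N) then b else c.

Lemma Vent (p : seqs k t -> R) (i j : 'I_3) :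
  Vxi S p i j = entv (cxi S p i0 i0) (cxi S p i0 i1) (cxi S p i1 i2) (val i) (val j).
Proof.
rewrite mxE.
case: (ord3_cases i) => ->; case: (ord3_cases j) => -> //=; rewrite /entv /=;
  rewrite ?cxiE; apply: eq_bigr => s _; congr (_ * _);
  rewrite ?ts11 ?ts22 ?ts20 //; rewrite ts_sym ?ts20 //.
Qed.

Lemma tr_tmul m n (N : 'M[R]_(m, n)) : 0 <= \tr (N^T *m N).
Proof.
rewrite /mxtrace; apply: sumr_ge0 => i _; rewrite mxE; apply: sumr_ge0 => l _.
by rewrite mxE -expr2 sqr_ge0.
Qed.

Lemma ts_psd s (x : 'I_3 -> R) : 0 <= \sum_i \sum_j x i * ts s i j * x j.
Proof.
set W := \sum_i x i *: Gmat R s i.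
have E : \sum_i \sum_j x i * ts s i j * x j = \tr (W^T *m P *m W).
  have WT : W^T = \sum_i x i *: (Gmat R s i)^T.
    by rewrite raddf_sum; apply: eq_bigr => i _; rewrite /= linearZ.
  rewrite WT !mulmx_suml raddf_sum /=; apply: eq_bigr => i _.
  rewrite /W mulmx_sumr raddf_sum /=; apply: eq_bigr => j _.
  rewrite -scalemxAr -!scalemxAl !mxtraceZ /ts /Cs hB; ring.
rewrite E -(@PP R k k0) -{1}Ptr !mulmxA -trmx_mul -mulmxA; exact: tr_tmul.
Qed.

Lemma bilE (u w : 'cV[R]_3) (V : 'M[R]_3) :
  bil u V w = \sum_i \sum_j u i 0 * V i j * w j 0.
Proof.
rewrite /bil mxE exchange_big; apply: eq_bigr => j _; rewrite mxE mulr_suml.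
by apply: eq_bigr => i _; rewrite mxE.
Qed.

Lemma V_psd (p : seqs k t -> R) (Hp : is_measure p) (x : 'cV[R]_3) :
  0 <= bil x (Vxi S p) x.
Proof.
rewrite bilE.
have -> : \sum_i \sum_j x i 0 * Vxi S p i j * x j 0 =
          \sum_s p s * \sum_i \sum_j x i 0 * ts s i j * x j 0.
  transitivity (\sum_i \sum_j \sum_s p s * (x i 0 * ts s i j * x j 0)).
    apply: eq_bigr => i _; apply: eq_bigr => j _.
    rewrite mxE cxiE mulr_sumr mulr_suml; apply: eq_bigr => s _; ring.
  under eq_bigr do rewrite exchange_big.
  rewrite exchange_big; apply: eq_bigr => s _; rewrite mulr_sumr.
  by apply: eq_bigr => i _; rewrite mulr_sumr.
apply: sumr_ge0 => s _; apply: mulr_ge0; first exact: Hp.1.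
exact: (ts_psd s (fun i => x i 0)).
Qed.
End Cx.



Section GS.
Variable R : realFieldType.
Lemma gen_schur n m (V : 'M[R]_n) (L : 'M[R]_(n, m)) (l w : 'cV[R]_n) (y : 'cV[R]_m) (X : 'M[R]_m) :
  V^T = V -> (L^T *m V *m L) *m X *m (L^T *m V *m L) = L^T *m V *m L ->
  l = w + L *m y -> L^T *m V *m w = 0 ->
  l^T *m V *m l - l^T *m V *m L *m X *m L^T *m V *m l = w^T *m V *m w.
Proof.
move=> VT AXA ldef Lw0.
set A := L^T *m V *m L.
have AT : A^T = A by rewrite /A !trmx_mul trmxK VT mulmxA.
have u : L^T *m V *m l = A *m y by rewrite ldef mulmxDr Lw0 add0r /A !mulmxA.
have lVL : l^T *m V *m L = (A *m y)^T by rewrite -u !trmx_mul trmxK VT mulmxA.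
have E2 : l^T *m V *m L *m X *m L^T *m V *m l = (l^T *m V *m L) *m X *m (L^T *m V *m l).
  by rewrite !mulmxA.
rewrite E2 lVL u quad_ginv //.
have wVL : w^T *m V *m L = 0.
  have : (L^T *m V *m w)^T = 0 by rewrite Lw0 trmx0.
  by rewrite !trmx_mul trmxK VT mulmxA.
have E1 : l^T *m V *m l = w^T *m V *m w + y^T *m A *m y.
  rewrite {1}ldef linearD /= trmx_mul !mulmxDl.
  rewrite ldef !mulmxDr.
  rewrite (mulmxA (w^T *m V)) wVL mul0mx addr0.
  rewrite -!mulmxA (mulmxA L^T V w) Lw0 !mulmx0 add0r.
  by rewrite /A !mulmxA.
by rewrite E1 addrK.
Qed.

End GS.



Section Dx.
Variable R : realFieldType.
Variable cx : 'I_3 -> 'I_3 -> R.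
Variables a b c : R.
Hypothesis cxent : forall i j, cx i j = entv a b c (val i) (val j).
Let V : 'M[R]_3 := \matrix_(i, j) cx i j.
Hypothesis Vpsd : forall x, 0 <= bil x V x.

Lemma rowmx0 (u v : 'cV[R]_3) i : row_mx u v i (ord0 : 'I_2) = u i 0.
Proof.
have -> : (ord0 : 'I_2) = lshift 1 (ord0 : 'I_1) by apply: val_inj.
by rewrite row_mxEl.
Qed.
Lemma rowmx1 (u v : 'cV[R]_3) i : row_mx u v i (lift ord0 (ord0 : 'I_1)) = v i 0.
Proof.
have -> : (lift ord0 (ord0 : 'I_1) : 'I_2) = rshift 1 (ord0 : 'I_1) by apply: val_inj.
by rewrite row_mxEr.
Qed.

Ltac mxx := repeat progress (rewrite ?mxE ?big_ord_recl ?big_ord0 ?cxent /=).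

Lemma row_mxE3 (u v : 'cV[R]_3) :
  row_mx u v = \matrix_(i < 3, j < 2) (if val j == 0%N then u i 0 else v i 0).
Proof.
apply/matrixP => i j; case: (ord2_cases j) => ->; by rewrite ?rowmx0 ?rowmx1 mxE.
Qed.

Lemma bil3 x y z u v w :
  bil (vec3 x y z) V (vec3 u v w) =
  a * (x * u + y * v + z * w) + b * (x * v + x * w + y * u + z * u) + c * (y * w + z * v).
Proof. rewrite /bil /V; mxx; rewrite /entv /=; ring. Qed.

Lemma lin_zero (g be : R) : 0 <= g -> (forall t, 0 <= g * t ^+ 2 + be * t) -> be = 0.
Proof.
move=> g0 H; have g1 : g + 1 != 0 by rewrite gt_eqF // ltr_wpDl.
have := H (- be / (g + 1)).
have -> : g * (- be / (g + 1)) ^+ 2 + be * (- be / (g + 1)) = - (be ^+ 2) / (g + 1) ^+ 2.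
  by field.
move=> h; have : 0 <= - (be ^+ 2).
  have gp : 0 < (g + 1) ^+ 2 by rewrite exprn_gt0 // ltr_wpDl.
  by move: h; rewrite pmulr_lge0 // invr_gt0.
by rewrite oppr_ge0 => h2; apply/eqP; rewrite -sqrf_eq0 eq_le h2 sqr_ge0.
Qed.

Lemma a_ge0 : 0 <= a.
Proof. by have := Vpsd (vec3 1 0 0); rewrite bil3; move=> h; nra. Qed.

Lemma psd1 : a + c = 0 -> b = 0.
Proof.
move=> ac.
suff : 4 * b = 0 by move/eqP; rewrite mulf_eq0 pnatr_eq0 /= => /eqP.
apply: (lin_zero a_ge0) => t; have := Vpsd (vec3 t 1 1); rewrite bil3.
move=> h; have e : c = - a by lra.
rewrite e in h; lra.
Qed.

Lemma psd2 : 3 * a + c - 4 * b = 0 -> b = a /\ c = a.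
Proof.
move=> D0.
have ab : 4 * a - 4 * b = 0.
  apply: (lin_zero a_ge0) => t; have := Vpsd (vec3 (2 + t) (-1) (-1)); rewrite bil3.
  move=> h; nra.
have e1 : b = a by lra.
split=> //.
have : -2 * a + 4 * b - 2 * c = 0.
  apply: (lin_zero a_ge0) => t; have := Vpsd (vec3 2 (-1 + t) (-1)); rewrite bil3.
  move=> h; nra.
lra.
Qed.


Lemma part1 lam :
  qproj V (vec3 1 lam lam) (vec3 0 1 1) =
  cx ord0 ord0 - ((\row_(j < 2) cx ord0 (lift ord0 j)) *m
     pinv (\matrix_(i < 2, j < 2) cx (lift ord0 i) (lift ord0 j))
     *m (\col_(i < 2) cx (lift ord0 i) ord0)) 0 0.
Proof.
rewrite /qproj !bil3 cxent /=.
set Q := \matrix_(i < 2, j < 2) _.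
set col := \col_(i < 2) _.
set row := \row_(j < 2) _.
have QT : Q^T = Q.
  apply/matrixP => i j; case: (ord2_cases i) => ->; case: (ord2_cases j) => ->;
  mxx; by rewrite /entv /=.
have [QXQ _ _ _] := pinv_MP2 QT.
have rowE : row = col^T.
  apply/matrixP => i j; rewrite !ord1; case: (ord2_cases j) => ->; mxx; by rewrite /entv.
rewrite rowE.
have [ac|ac] := eqVneq (a + c) 0.
- have b0 := psd1 ac.
  have col0 : col = 0.
    apply/matrixP => i j; rewrite !ord1; case: (ord2_cases i) => ->; mxx; by rewrite /entv /= b0.
  rewrite col0 mulmx0 mxE.
  have -> : a * (0 * 0 + 1 * 1 + 1 * 1) + b * (0 * 1 + 0 * 1 + 1 * 0 + 1 * 0) + c * (1 * 1 + 1 * 1) = 0.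
    by move/eqP: ac => ac; lra.
  rewrite invr0 b0 /entv /=; have ce : c = - a by move/eqP: ac => ac; lra.
  rewrite ce; ring.
- pose y : 'cV[R]_2 := \col_(i < 2) (b / (a + c)).
  have colE : col = Q *m y.
    apply/matrixP => i j; rewrite !ord1; case: (ord2_cases i) => ->; mxx; rewrite /entv /=;
    field; exact: ac.
  rewrite colE quad_ginv //.
  mxx; rewrite /entv /=. field.
  rewrite ac /= (_ : a * 2 + c * 2 = 2 * (a + c)); last ring.
  by rewrite mulf_neq0 // pnatr_eq0.
Qed.

Lemma entv_sym i j : entv a b c i j = entv a b c j i.
Proof. by rewrite /entv eq_sym orbC. Qed.

Lemma VT : V^T = V.
Proof. by apply/matrixP => i j; rewrite !mxE !cxent entv_sym. Qed.

Lemma part2 lam lam1 lam2 : 1 + 2 * lam != 0 -> 1 + lam1 + lam2 != 0 ->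
  (1 + 2 * lam) ^- 2 * qproj V (vec3 1 lam lam) (vec3 2 (-1) (-1))
   = (1 + lam1 + lam2) ^- 2 * q1 V lam1 lam2.
Proof.
move=> l0 s0.
rewrite /q1 /=.
rewrite row_mxE3.
set L0 := \matrix_(i < 3, j < 2) _.
set l := vec3 1 lam1 lam2.
set A := L0^T *m V *m L0.
have AT : A^T = A by rewrite /A !trmx_mul trmxK VT mulmxA.
have [AXA _ _ _] := pinv_MP2 AT.
have [D0|D0] := eqVneq (3 * a + c - 4 * b) 0.
- have [ba ca] := psd2 D0.
  have Lw0 : L0^T *m V *m l = 0.
    apply/matrixP => i j; rewrite !ord1; case: (ord2_cases i) => ->; mxx; rewrite /entv /= ba ca; ring.
  have ldef : l = l + L0 *m 0 by rewrite mulmx0 addr0.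
  rewrite (gen_schur VT AXA ldef Lw0).
  rewrite -/(bil l V l) /qproj /l !bil3 ba ca.
  rewrite (_ : a * (1 * 2 + lam * -1 + lam * -1) + a * (1 * -1 + 1 * -1 + lam * 2 + lam * 2) + a * (lam * -1 + lam * -1) = 0); last ring.
  rewrite expr0n /= mul0r subr0.
  by field; rewrite s0 l0.
- pose x := (1 + lam1 + lam2) / (3 * a + c - 4 * b) * (a + c - 2 * b).
  pose z := (1 + lam1 + lam2) / (3 * a + c - 4 * b) * (a - b).
  pose y0 := (x * lam1 - z) / (1 + lam1 + lam2).
  pose y : 'cV[R]_2 := \col_(i < 2) (if val i == 0%N then y0 else x - 1 - y0).
  have ldef : l = vec3 x z z + L0 *m y.
    apply/matrixP => i j; rewrite !ord1; case: (ord3_cases i) => ->; rewrite /y /y0 /x /z; mxx;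
    field; rewrite ?s0 ?D0 //.
  have Lw0 : L0^T *m V *m vec3 x z z = 0.
    apply/matrixP => i j; rewrite !ord1; case: (ord2_cases i) => ->; rewrite /x /z; mxx;
    rewrite /entv /=; field; rewrite ?s0 ?D0 //.
  rewrite (gen_schur VT AXA ldef Lw0).
  rewrite -/(bil (vec3 x z z) V (vec3 x z z)) /qproj !bil3 /x /z.
  field.
  rewrite D0 s0 l0 /= andbT (_ : a * 6 + b * -8 + c * 2 = 2 * (3 * a + c - 4 * b)); last ring.
  by rewrite mulf_neq0 // pnatr_eq0.
Qed.
End Dx.


Theorem lemma2 (R : realFieldType) (k t : nat) (hk : (2 <= k)%N) (ht : (2 <= t)%N)
  (S : 'M[R]_k) (HS : typeH S) (p : seqs k t -> R) (Hp : is_measure p)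
  (lam lam1 lam2 : R) :
  let V := Vxi S p in
  qproj V (vec3 1 lam lam) (vec3 0 1 1) = qstar S p /\
  (1 + 2 * lam != 0 -> 1 + lam1 + lam2 != 0 ->
   (1 + 2 * lam) ^- 2 * qproj V (vec3 1 lam lam) (vec3 2 (-1) (-1))
   = (1 + lam1 + lam2) ^- 2 * q1 V lam1 lam2).
Proof.
move=> V.
have k0 : (0 < k)%N by apply: leq_trans hk.
have hB := @Btilde_typeH R k k0 S HS.
have cxent : forall i j, cxi S p i j =
   entv (cxi S p i0 i0) (cxi S p i0 i1) (cxi S p i1 i2) (val i) (val j).
  by move=> i j; rewrite -(Vent hB p i j) mxE.
have Vpsd : forall x, 0 <= bil x (\matrix_(i, j) cxi S p i j) x.
  by move=> x; exact: (V_psd k0 hB Hp x).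
split.
- exact: (part1 cxent Vpsd lam).
- exact: (part2 cxent Vpsd).
Qed.
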